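(* Let $G$ be a two-player stage game with $|V_1^{p,p}|>1$ and $|V_2^{p,p}|>1$. If $G\in\mathcal{G}_{LS}^{m,p}$, then $G\in\mathcal{G}_{LS}^{p,p}$.
   Context: A two-player stage game $G$ has finite nonempty action sets $A_1,A_2$ and payoffs $u_1,u_2:A_1\times A_2\to\mathbb{R}$, extended to mixed strategies by expectation. $G(T)$ is the $T$-round repetition with realized actions observed each round and payoffs the expected sum of stage payoffs; an SPE of $G(T)$ is a strategy profile whose continuation after every history of length $k<T$ is a Nash equilibrium of $G(T-k)$. Regimes: pure-pure ($p,p$): both players restricted to actions (in the stage game and in every round, including deviations); mixed-pure ($m,p$): player 1 may mix, player 2 uses only actions; mixed-mixed ($m,m$): both may mix. For regime $r$, $\mathrm{Nash}^r(G)$ is the set of stage-game profiles available in $r$ from which no player can profitably deviate unilaterally to a strategy available in $r$, and $V_i^r=\{u_i(\sigma):\sigma\in\mathrm{Nash}^r(G)\}$. Locally suboptimal behavior occurs in an SPE $\mu$ of $G(T)$ (regime $r$) if for some history $h$ of length $k<T$, $(\mu_1(h),\mu_2(h))\notin\mathrm{Nash}^r(G)$. $\mathcal{G}_{LS}^r$ is the set of stage games $G$ for which there exist $T\ge1$ and an SPE of $G(T)$ in regime $r$ in which locally suboptimal behavior occurs. *)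

(* Defs.v *)
From HB Require Import structures.
From mathcomp Require Import all_boot all_order all_algebra.
From mathcomp Require Import reals.
Set Implicit Arguments. Unset Strict Implicit. Unset Printing Implicit Defensive.
Import Order.TTheory GRing.Theory Num.Theory.
Local Open Scope ring_scope.

Section RepeatedGames.
Variable R : realType.

Definition is_dist (A : finType) (p : {ffun A -> R}) : Prop :=
  (forall a, 0 <= p a) /\ \sum_(a : A) p a = 1.

(* A pure action, seen as the point-mass mixed strategy. *)
Definition dirac (A : finType) (a : A) : {ffun A -> R} :=
  [ffun b => (b == a)%:R].

(* Strategies available to a player: any mixed strategy if the player may
   mix ([mix = true]), otherwise only (point masses at) actions. *)
Definition avail (A : finType) (mix : bool) (p : {ffun A -> R}) : Prop :=
  if mix then is_dist p else exists a : A, p = dirac a.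

(* A regime: (player 1 may mix, player 2 may mix). *)
Definition regime := (bool * bool)%type.
Definition reg_pp : regime := (false, false).
Definition reg_mp : regime := (true, false).
Definition reg_mm : regime := (true, true).

Variables (A1 A2 : finType) (u1 u2 : A1 -> A2 -> R).

Definition Eu (f : A1 -> A2 -> R) (p1 : {ffun A1 -> R}) (p2 : {ffun A2 -> R}) : R :=
  \sum_(a1 : A1) \sum_(a2 : A2) p1 a1 * p2 a2 * f a1 a2.

Definition stageNash (r : regime) (p1 : {ffun A1 -> R}) (p2 : {ffun A2 -> R}) : Prop :=
  [/\ avail r.1 p1, avail r.2 p2,
      (forall q1, avail r.1 q1 -> Eu u1 q1 p2 <= Eu u1 p1 p2) &
      (forall q2, avail r.2 q2 -> Eu u2 p1 q2 <= Eu u2 p1 p2)].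

Definition V1 (r : regime) (v : R) : Prop :=
  exists p1 p2, stageNash r p1 p2 /\ v = Eu u1 p1 p2.
Definition V2 (r : regime) (v : R) : Prop :=
  exists p1 p2, stageNash r p1 p2 /\ v = Eu u2 p1 p2.

Definition card_gt1 (S : R -> Prop) : Prop :=
  exists v w, v <> w /\ S v /\ S w.

(* Histories of realized action profiles; behaviour strategies. *)
Definition history := seq (A1 * A2).
Definition strat1 := history -> {ffun A1 -> R}.
Definition strat2 := history -> {ffun A2 -> R}.

Definition valid1 (r : regime) (s : strat1) : Prop := forall h, avail r.1 (s h).
Definition valid2 (r : regime) (s : strat2) : Prop := forall h, avail r.2 (s h).

Fixpoint value (f : A1 -> A2 -> R) (s1 : strat1) (s2 : strat2) (h : history)
    (n : nat) : R :=
  match n with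
  | 0 => 0
  | n'.+1 => \sum_(a1 : A1) \sum_(a2 : A2)
              s1 h a1 * s2 h a2 * (f a1 a2 + value f s1 s2 (rcons h (a1, a2)) n')
  end.

Definition SPE (r : regime) (T : nat) (s1 : strat1) (s2 : strat2) : Prop :=
  [/\ valid1 r s1, valid2 r s2 &
      forall h : history, (size h < T)%N ->
        (forall t1, valid1 r t1 ->
           value u1 t1 s2 h (T - size h) <= value u1 s1 s2 h (T - size h)) /\
        (forall t2, valid2 r t2 ->
           value u2 s1 t2 h (T - size h) <= value u2 s1 s2 h (T - size h))].

Definition locally_suboptimal (r : regime) (T : nat) (s1 : strat1) (s2 : strat2) : Prop :=
  exists h : history, (size h < T)%N /\ ~ stageNash r (s1 h) (s2 h).

Definition in_GLS (r : regime) : Prop :=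
  exists T : nat, (1 <= T)%N /\
    exists (s1 : strat1) (s2 : strat2), SPE r T s1 s2 /\ locally_suboptimal r T s1 s2.

End RepeatedGames.

(* Main.v *)
Require Import Defs.
From mathcomp Require Import all_boot all_order all_algebra.
From mathcomp Require Import reals.
From mathcomp Require Import ring lra.
From Stdlib Require Import Classical.
Set Implicit Arguments. Unset Strict Implicit. Unset Printing Implicit Defensive.
Import Order.TTheory GRing.Theory Num.Theory.
Local Open Scope ring_scope.



Section Aux.
Variable R : realType.
Variables (A1 A2 : finType) (u1 u2 : A1 -> A2 -> R).

Lemma sum_dirac (A : finType) (b : A) (F : A -> R) :
  \sum_a dirac R b a * F a = F b.
Proof.
rewrite (bigD1 b) //= big1 ?addr0; first by rewrite ffunE eqxx mul1r.
by move=> a /negbTE Hab; rewrite ffunE Hab mul0r.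
Qed.

Lemma Eu_r f (p : {ffun A1 -> R}) (b : A2) :
  Eu f p (dirac R b) = \sum_a p a * f a b.
Proof.
rewrite /Eu; apply: eq_bigr => a _.
under eq_bigr => a2 _ do rewrite -mulrA.
by rewrite -big_distrr /= sum_dirac.
Qed.

Lemma Eu_dd f (a : A1) (b : A2) :
  Eu f (dirac R a) (dirac R b) = f a b.
Proof. by rewrite Eu_r sum_dirac. Qed.

Definition PN (a : A1) (b : A2) :=
  (forall a', u1 a' b <= u1 a b) /\ (forall b', u2 a b' <= u2 a b).

Lemma nash_PN a b : stageNash u1 u2 reg_pp (dirac R a) (dirac R b) -> PN a b.
Proof.
case=> _ _ H1 H2; split.
  by move=> a'; have := H1 (dirac R a') (ex_intro _ a' erefl); rewrite !Eu_dd.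
by move=> b'; have := H2 (dirac R b') (ex_intro _ b' erefl); rewrite !Eu_dd.
Qed.

Lemma V1_ext v : V1 u1 u2 reg_pp v -> exists a b, PN a b /\ v = u1 a b.
Proof.
case=> p1 [p2 [HN ->]].
have HN' := HN; case: HN' => [[a Ea] [b Eb] _ _]; subst p1 p2.
by exists a, b; rewrite Eu_dd; split => //; apply: nash_PN.
Qed.

Lemma V2_ext v : V2 u1 u2 reg_pp v -> exists a b, PN a b /\ v = u2 a b.
Proof.
case=> p1 [p2 [HN ->]].
have HN' := HN; case: HN' => [[a Ea] [b Eb] _ _]; subst p1 p2.
by exists a, b; rewrite Eu_dd; split => //; apply: nash_PN.
Qed.

Lemma hilo1 : card_gt1 (V1 u1 u2 reg_pp) ->
  exists h1 h2 l1 l2, PN h1 h2 /\ PN l1 l2 /\ u1 l1 l2 < u1 h1 h2.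
Proof.
case=> v [w [Hvw [/V1_ext [a [b [Hab Ev]]] /V1_ext [c [d [Hcd Ew]]]]]].
subst v w.
case: (ltgtP (u1 a b) (u1 c d)) => H.
- by exists c, d, a, b.
- by exists a, b, c, d.
- by [].
Qed.

Lemma hilo2 : card_gt1 (V2 u1 u2 reg_pp) ->
  exists h1 h2 l1 l2, PN h1 h2 /\ PN l1 l2 /\ u2 l1 l2 < u2 h1 h2.
Proof.
case=> v [w [Hvw [/V2_ext [a [b [Hab Ev]]] /V2_ext [c [d [Hcd Ew]]]]]].
subst v w.
case: (ltgtP (u2 a b) (u2 c d)) => H.
- by exists c, d, a, b.
- by exists a, b, c, d.
- by [].
Qed.

Lemma allPN_nash (p1 : {ffun A1 -> R}) (b : A2) :
  (forall a b, PN a b) -> is_dist p1 ->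
  stageNash u1 u2 reg_mp p1 (dirac R b).
Proof.
move=> HPN [p0 p1s].
have Hc : forall a a', u1 a b = u1 a' b.
  by move=> a a'; apply/eqP; rewrite eq_le (HPN a b).1 (HPN a' b).1.
have Hq : forall q : {ffun A1 -> R}, is_dist q ->
   forall a0, Eu u1 q (dirac R b) = u1 a0 b.
  move=> q [_ qs] a0; rewrite Eu_r.
  under eq_bigr => a _ do rewrite (Hc a a0).
  by rewrite -big_distrl /= qs mul1r.
split => //; first by exists b.
- move=> q1 Hq1 /=.
  case: (pickP A1) => [a0 _|H0].
    by rewrite (Hq _ Hq1 a0) (Hq _ (conj p0 p1s) a0).
  by rewrite /Eu !big_pred0.
- move=> q2 [b' ->]; rewrite !Eu_r; apply: ler_sum => a _.
  by apply: ler_wpM2l => //; apply: (HPN a b).2.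
Qed.

Lemma value_pure f (t1 : strat1 R A1 A2) (t2 : strat2 R A1 A2) h n b1 b2 :
  t1 h = dirac R b1 -> t2 h = dirac R b2 ->
  value f t1 t2 h n.+1 = f b1 b2 + value f t1 t2 (rcons h (b1, b2)) n.
Proof.
move=> E1 E2 /=; rewrite E1 E2.
under eq_bigr => a1 _ do (under eq_bigr => a2 _ do rewrite -mulrA;
   rewrite -big_distrr /= sum_dirac).
by rewrite sum_dirac.
Qed.

End Aux.


Section Constr.
Variable R : realType.
Variables (A1 A2 : finType) (u1 u2 : A1 -> A2 -> R).
Variables (x1 : A1) (x2 : A2) (H1 H2 P1 P2 : A1 * A2).
Hypothesis hH1 : PN u1 u2 H1.1 H1.2.
Hypothesis hH2 : PN u1 u2 H2.1 H2.2.
Hypothesis hP1 : PN u1 u2 P1.1 P1.2.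
Hypothesis hP2 : PN u1 u2 P2.1 P2.2.

Definition rew (m : nat) := if odd m then H1 else H2.
Definition Gc (c : A1 * A2) (m : nat) : A1 * A2 :=
  if c.1 == x1 then (if c.2 == x2 then rew m else P2)
  else (if c.2 == x2 then P1 else rew m).
Definition g (h : history A1 A2) := if h is c :: _ then Gc c (size h) else (x1, x2).
Definition gs1 : strat1 R A1 A2 := fun h => dirac R (g h).1.
Definition gs2 : strat2 R A1 A2 := fun h => dirac R (g h).2.

Lemma PN_G c m : PN u1 u2 (Gc c m).1 (Gc c m).2.
Proof. by rewrite /Gc /rew; case: ifP; case: ifP => //; case: ifP. Qed.

Lemma value_G f c t n : value f gs1 gs2 (c :: t) n =
  \sum_(j < n) f (Gc c ((size t).+1 + j)).1 (Gc c ((size t).+1 + j)).2.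
Proof.
elim: n t => [|n IH] t; first by rewrite big_ord0.
rewrite (@value_pure _ _ _ _ _ _ _ _ (Gc c (size t).+1).1 (Gc c (size t).+1).2) //.
rewrite rcons_cons IH big_ord_recl addn0 size_rcons.
congr (_ + _); apply: eq_bigr => j _ /=.
by rewrite addSnnS.
Qed.

Lemma dev1 n t1 c t : valid1 reg_pp t1 ->
  value u1 t1 gs2 (c :: t) n <= value u1 gs1 gs2 (c :: t) n.
Proof.
move=> Ht1; elim: n t => [|n IH] t; first by [].
have [b Eb] := Ht1 (c :: t).
rewrite (value_pure _ _ Eb (erefl (gs2 (c :: t)))).
rewrite (@value_pure _ _ _ _ gs1 gs2 _ _ (g (c :: t)).1 (g (c :: t)).2) //.
apply: lerD; first exact: (PN_G _ _).1.
rewrite !rcons_cons; apply: (le_trans (IH _)).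
by rewrite !value_G !size_rcons.
Qed.

Lemma dev2 n t2 c t : valid2 reg_pp t2 ->
  value u2 gs1 t2 (c :: t) n <= value u2 gs1 gs2 (c :: t) n.
Proof.
move=> Ht2; elim: n t => [|n IH] t; first by [].
have [b Eb] := Ht2 (c :: t).
rewrite (value_pure _ _ (erefl (gs1 (c :: t))) Eb).
rewrite (@value_pure _ _ _ _ gs1 gs2 _ _ (g (c :: t)).1 (g (c :: t)).2) //.
apply: lerD; first exact: (PN_G _ _).2.
rewrite !rcons_cons; apply: (le_trans (IH _)).
by rewrite !value_G !size_rcons.
Qed.

Lemma sum_alt (F : nat -> R) k a b :
  (forall j, F j = if odd j.+1 then a else b) ->
  \sum_(j < k.*2) F j = (a + b) *+ k.
Proof.
move=> HF; elim: k => [|k IH]; first by rewrite big_ord0.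
rewrite doubleS !big_ord_recr /= IH !HF /= odd_double /= mulrSr.
by rewrite -addrA.
Qed.

End Constr.


Lemma arith (R : realType) (K d B y x p a b : R) :
  B <= K * d -> y - x <= B -> d = a + b - 2 * p ->
  y + p * (K * 2) <= x + (a + b) * K.
Proof.
move=> h1 h2 hd; subst d.
have e : K * (a + b - 2 * p) = (a + b) * K - p * (K * 2) by ring.
rewrite e in h1; lra.
Qed.

Lemma bound_k (R : realType) (B d : R) : 0 < d -> 0 <= B ->
  exists k : nat, forall k', (k <= k')%N -> B <= k'%:R * d.
Proof.
move=> hd hB; exists (Num.Def.archi_bound (B / d)) => k' hk.
have h := archi_boundP (divr_ge0 hB (ltW hd)).
rewrite ltr_pdivrMr // in h.
apply: (le_trans (ltW h)); apply: ler_wpM2r; first exact: ltW.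
by rewrite ler_nat.
Qed.

Lemma le_sum_abs (R : realType) (A : finType) (F : A -> R) a :
  F a <= \sum_b `|F b|.
Proof.
apply: (le_trans (ler_norm _)).
rewrite (bigD1 a) //= lerDl; apply: sumr_ge0 => *; exact: normr_ge0.
Qed.

Theorem mainTheorem10 (R : realType) (A1 A2 : finType)
  (u1 u2 : A1 -> A2 -> R)
  (hA1 : (0 < #|A1|)%N) (hA2 : (0 < #|A2|)%N)
  (hV1 : card_gt1 (V1 u1 u2 reg_pp))
  (hV2 : card_gt1 (V2 u1 u2 reg_pp)) :
  in_GLS u1 u2 reg_mp -> in_GLS u1 u2 reg_pp.
Proof.
move=> [T0 [_ [t1 [t2 [[Vt1 Vt2 _] [h0 [_ Hn]]]]]]].
have nall : ~ (forall a b, PN u1 u2 a b).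
  move=> HPN; apply: Hn; have [b Eb] : exists b, t2 h0 = dirac R b := Vt2 h0; rewrite Eb.
  exact: allPN_nash (Vt1 h0).
have [x1 nx1] := not_all_ex_not _ _ nall.
have [x2 nx] := not_all_ex_not _ _ nx1.
have [h11 [h12 [l11 [l12 [PH1 [PL1 lt1]]]]]] := hilo1 hV1.
have [h21 [h22 [l21 [l22 [PH2 [PL2 lt2]]]]]] := hilo2 hV2.
pose H1 := (h11, h12); pose H2 := (h21, h22).
pose P1 := if u1 l11 l12 <= u1 h21 h22 then (l11, l12) else (h21, h22).
pose P2 := if u2 l21 l22 <= u2 h11 h12 then (l21, l22) else (h11, h12).
have hP1 : PN u1 u2 P1.1 P1.2 by rewrite /P1; case: ifP.
have hP2 : PN u1 u2 P2.1 P2.2 by rewrite /P2; case: ifP.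
have hP1a : u1 P1.1 P1.2 <= u1 l11 l12 /\ u1 P1.1 P1.2 <= u1 h21 h22.
  by rewrite /P1; case: ifP => /= H; split => //; apply: ltW; rewrite ltNge H.
have hP2a : u2 P2.1 P2.2 <= u2 l21 l22 /\ u2 P2.1 P2.2 <= u2 h11 h12.
  by rewrite /P2; case: ifP => /= H; split => //; apply: ltW; rewrite ltNge H.
pose d1 := u1 h11 h12 + u1 h21 h22 - 2 * u1 P1.1 P1.2.
pose d2 := u2 h11 h12 + u2 h21 h22 - 2 * u2 P2.1 P2.2.
have hd1 : 0 < d1 by rewrite /d1; case: hP1a => *; lra.
have hd2 : 0 < d2 by rewrite /d2; case: hP2a => *; lra.
pose B1 := \sum_a `|u1 a x2| + `|u1 x1 x2|.
pose B2 := \sum_b `|u2 x1 b| + `|u2 x1 x2|.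
have hB1 : 0 <= B1 by apply: addr_ge0 => //; apply: sumr_ge0.
have hB2 : 0 <= B2 by apply: addr_ge0 => //; apply: sumr_ge0.
have [k1 hk1] := bound_k hd1 hB1.
have [k2 hk2] := bound_k hd2 hB2.
pose k := (k1 + k2)%N.
have K1 : B1 <= k%:R * d1 by apply: hk1; rewrite leq_addr.
have K2 : B2 <= k%:R * d2 by apply: hk2; rewrite leq_addl.
pose s1 := gs1 R x1 x2 H1 H2 P1 P2.
pose s2 := gs2 R x1 x2 H1 H2 P1 P2.
exists (k.*2).+1; split => //; exists s1, s2; split; last first.
  exists [::]; split => //= HN.
  by apply: nx; apply: (nash_PN HN).
split; [by move=> h; eexists | by move=> h; eexists |].
case=> [|c t] hsz; last first.
  split => [t1' Ht1|t2' Ht2].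
  exact: (@dev1 _ _ _ u1 u2 x1 x2 H1 H2 P1 P2 PH1 PH2 hP1 hP2 _ t1' c t Ht1).
  exact: (@dev2 _ _ _ u1 u2 x1 x2 H1 H2 P1 P2 PH1 PH2 hP1 hP2 _ t2' c t Ht2).
rewrite subn0; split.
- move=> t1' Ht1; have [b Eb] : exists b, t1' [::] = dirac R b := Ht1 [::].
  rewrite (value_pure _ _ Eb (erefl (s2 [::]))).
  rewrite (@value_pure _ _ _ _ s1 s2 [::] _ x1 x2) //.
  have le1 := @dev1 _ _ _ u1 u2 x1 x2 H1 H2 P1 P2 PH1 PH2 hP1 hP2 (k.*2) t1' (b, x2) [::] Ht1.
  apply: (le_trans (lerD (lexx _) le1)).
  rewrite !value_G /=.
  have [->|nb] := eqVneq b x1; first by [].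
  rewrite /Gc /= eqxx (negbTE nb) sumr_const card_ord.
  rewrite (eq_bigr (fun j : 'I_(k.*2) => if odd j.+1 then u1 h11 h12 else u1 h21 h22)); last first.
    by move=> j _; rewrite /rew /= ?eqxx ?add1n; case: ifP.
  rewrite (@sum_alt R (fun j => if odd j.+1 then u1 h11 h12 else u1 h21 h22) k (u1 h11 h12) (u1 h21 h22)); last by [].
    rewrite -mulr_natr -(mulr_natr (_ + _)) -muln2 natrM.
    apply: (arith K1 _ (erefl d1)).
    rewrite /B1; apply: lerD; first exact: le_sum_abs.
    rewrite -normrN; apply: ler_norm.
- move=> t2' Ht2; have [b Eb] : exists b, t2' [::] = dirac R b := Ht2 [::].
  rewrite (value_pure _ _ (erefl (s1 [::])) Eb).
  rewrite (@value_pure _ _ _ _ s1 s2 [::] _ x1 x2) //.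
  have le2 := @dev2 _ _ _ u1 u2 x1 x2 H1 H2 P1 P2 PH1 PH2 hP1 hP2 (k.*2) t2' (x1, b) [::] Ht2.
  apply: (le_trans (lerD (lexx _) le2)).
  rewrite !value_G /=.
  have [->|nb] := eqVneq b x2; first by [].
  rewrite /Gc /= eqxx (negbTE nb) sumr_const card_ord.
  rewrite (eq_bigr (fun j : 'I_(k.*2) => if odd j.+1 then u2 h11 h12 else u2 h21 h22)); last first.
    by move=> j _; rewrite /rew /= ?eqxx ?add1n; case: ifP.
  rewrite (@sum_alt R (fun j => if odd j.+1 then u2 h11 h12 else u2 h21 h22) k (u2 h11 h12) (u2 h21 h22)); last by [].
    rewrite -mulr_natr -(mulr_natr (_ + _)) -muln2 natrM.
    apply: (arith K2 _ (erefl d2)).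
    rewrite /B2; apply: lerD; first exact: le_sum_abs.
    rewrite -normrN; apply: ler_norm.
Qed.
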